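(* For every strategy $\sigma$ and adversary $\xi$ of $\widetilde{\mathcal M}$, the map $\beta\mapsto V_{\sigma,\xi,\beta}$ is continuous on $(0,1]$ (componentwise, i.e. $\beta\mapsto V_{\sigma,\xi,\beta}(q)$ is continuous for every $q\in Q$).
   Context: Fix $n\ge1$, $s\ge1$, $\varepsilon\ge0$, a finite mode set $U=\{1,\dots,m\}$, continuous $f_u:\mathbb R^n\to\mathbb R^n$, and a Borel probability $\widehat p_v$ on $\mathbb R^n$ with finite $s$-th moment; $T^u_{p_v}(B\mid x):=p_v(\{v:f_u(x)+v\in B\})$. Abstraction. $X\subset\mathbb R^n$ bounded Borel, $X_{\rm tgt}\subset X$; $Q_{\rm safe}$ a finite family of pairwise disjoint Borel sets with union $X$, each either contained in or disjoint from $X_{\rm tgt}$; $Q_{\rm tgt}$ those contained in $X_{\rm tgt}$; $q_u:=\mathbb R^n\setminus X$; $Q:=Q_{\rm safe}\cup\{q_u\}$; $A:=U$. Bounds $\underline P\le\overline P$ in $[0,1]$ on $Q\times A\times Q$ with $\sum_{q'}\underline P(q,a,q')\le1\le\sum_{q'}\overline P(q,a,q')$, $\underline P(q,a,q')\le\inf_{x\in q}T^a_{\widehat p_v}(q'\mid x)$, $\overline P(q,a,q')\ge\sup_{x\in q}T^a_{\widehat p_v}(q'\mid x)$ for $q\in Q_{\rm safe}$, and $\underline P(q_u,a,q_u)=\overline P(q_u,a,q_u)=1$. $\widehat\Gamma_{q,a}:=\{\gamma\in\mathcal D(Q):\underline P(q,a,\cdot)\le\gamma\le\overline P(q,a,\cdot)\}$.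 With $c(q,q'):=\inf\{\|x-y\|^s:x\in q,y\in q'\}$ and $\mathcal T_c(\gamma,\gamma')$ the minimal $c$-transport cost over couplings of $\gamma,\gamma'$, $\Gamma_{q,a}:=\{\gamma:\exists\widehat\gamma\in\widehat\Gamma_{q,a},\ \mathcal T_c(\gamma,\widehat\gamma)\le\varepsilon^s\}$ for $q\in Q_{\rm safe}$, $\Gamma_{q_u,a}:=\widehat\Gamma_{q_u,a}$. Discounted robust MDP with rewards. $\widetilde{\mathcal M}=(Q,A,\widetilde\Gamma,r,\beta)$ where $\widetilde\Gamma_{q,a}:=\{\delta_{q_u}\}$ for $q\in Q_{\rm tgt}$ and $\widetilde\Gamma_{q,a}:=\Gamma_{q,a}$ otherwise, reward $r(q):=1$ if $q\in Q_{\rm tgt}$ and $0$ otherwise, and discount $\beta\in(0,1]$. A strategy $\sigma$ maps finite paths to actions; an adversary $\xi$ maps each finite path $\omega^k$ and action $a$ to a distribution in $\widetilde\Gamma_{\mathrm{last}(\omega^k),a}$; $P^{q,\sigma}_\xi$ is the path measure with $\omega(0)=q$ and $P[\omega(k+1)=q'\mid\omega^k]=\xi(\omega^k,\sigma(\omega^k))(q')$. The value function is $V_{\sigma,\xi,\beta}(q):=\mathbb E_{P^{q,\sigma}_\xi}\big[\sum_{k=0}^\infty\beta^k r(\omega(k))\big]$. *)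

(* Defs.v *)
From HB Require Import structures.
From mathcomp Require Import all_boot all_order all_algebra.
From mathcomp Require Import all_classical all_reals all_analysis.
Set Implicit Arguments. Unset Strict Implicit. Unset Printing Implicit Defensive.
Import Order.TTheory GRing.Theory Num.Theory.
Import numFieldNormedType.Exports.
Local Open Scope classical_set_scope.
Local Open Scope ring_scope.

(* The state space R^n is modelled as n.-tuple R, which MathComp-Analysis
   equips with the product sigma-algebra of the Borel sets of R (= the Borel
   sigma-algebra of R^n).                    *)
Section Rn.
Context {R : realType} {n : nat}.

Definition vadd (x y : n.-tuple R) : n.-tuple R := [tuple tnth x i + tnth y i | i < n].
Definition vsub (x y : n.-tuple R) : n.-tuple R := [tuple tnth x i - tnth y i | i < n].
Definition enorm (x : n.-tuple R) : R := Num.sqrt (\sum_(i < n) tnth x i ^+ 2).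

Definition continuous_Rn (g : n.-tuple R -> n.-tuple R) : Prop :=
  forall x (e : R), 0 < e -> exists d : R, 0 < d /\
    forall y, enorm (vsub y x) < d -> enorm (vsub (g y) (g x)) < e.

Definition bounded_Rn (A : set (n.-tuple R)) : Prop :=
  exists M : R, forall x, A x -> enorm x <= M.

Definition Tker (p : probability (n.-tuple R) R) (fu : n.-tuple R -> n.-tuple R)
  (B : set (n.-tuple R)) (x : n.-tuple R) : \bar R :=
  p [set v | B (vadd (fu x) v)].
End Rn.

(* Abstract states: Q = Q_safe \cup {q_u}, with Q_safe indexed by a finite
   type K (Some k) and q_u = None.                                        *)
Definition AState (K : finType) := option K.

Section Abstraction.
Context {R : realType} {n : nat} {K : finType}.
Variable (X : set (n.-tuple R)) (cell : K -> set (n.-tuple R)).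

Definition cellQ (q : option K) : set (n.-tuple R) :=
  match q with Some k => cell k | None => ~` X end.

Definition is_tgt (Xtgt : set (n.-tuple R)) (q : option K) : bool :=
  match q with Some k => `[< cell k `<=` Xtgt >] | None => false end.

Definition reward (Xtgt : set (n.-tuple R)) (q : option K) : R :=
  (is_tgt Xtgt q)%:R.

Definition is_dist (g : option K -> R) : Prop :=
  (forall q, 0 <= g q) /\ \sum_(q : option K) g q = 1.

Definition dirac_qu : option K -> R := fun q => (q == None)%:R.

Definition cost (s : R) (q q' : option K) : \bar R :=
  ereal_inf [set ((enorm (vsub x y)) `^ s)%:E
            | x in cellQ q & y in cellQ q'].

Definition coupling (g g' : option K -> R) (pi : option K -> option K -> R) : Prop :=
  (forall q q', 0 <= pi q q') /\
  (forall q, \sum_(q' : option K) pi q q' = g q) /\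
  (forall q', \sum_(q : option K) pi q q' = g' q').

Definition transport_cost (s : R) (g g' : option K -> R) : \bar R :=
  ereal_inf [set (\sum_(q : option K) \sum_(q' : option K) (pi q q')%:E * cost s q q')%E
            | pi in coupling g g'].

Variable (m : nat) (lo hi : option K -> 'I_m -> option K -> R).

Definition Gamma_hat (q : option K) (a : 'I_m) : set (option K -> R) :=
  [set g | is_dist g /\ forall q', lo q a q' <= g q' <= hi q a q'].

Definition Gamma (s eps : R) (q : option K) (a : 'I_m) : set (option K -> R) :=
  match q with
  | Some _ => [set g | is_dist g /\
                 exists gh, Gamma_hat q a gh /\
                   (transport_cost s g gh <= (eps `^ s)%:E)%E]
  | None => Gamma_hat q a
  end.

Definition Gamma_tilde (Xtgt : set (n.-tuple R)) (s eps : R) (q : option K) (a : 'I_m)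
  : set (option K -> R) :=
  if is_tgt Xtgt q then [set dirac_qu] else Gamma s eps q a.

(* strategies: finite paths -> actions;
   adversaries: finite paths -> actions -> distributions on Q *)
Definition strategy := seq (option K) -> 'I_m.
Definition adversary := seq (option K) -> 'I_m -> option K -> R.

Definition admissible_adversary (Xtgt : set (n.-tuple R)) (s eps : R) (xi : adversary) :=
  forall (q0 : option K) (w : seq (option K)) (a : 'I_m),
    Gamma_tilde Xtgt s eps (last q0 w) a (xi (q0 :: w) a).

(* probability, under P^{.,sigma}_xi, that the path prefix p continues with w *)
Fixpoint ext_prob (sigma : strategy) (xi : adversary) (p : seq (option K))
  (w : seq (option K)) : R :=
  match w with
  | [::] => 1
  | q' :: w' => xi p (sigma p) q' * ext_prob sigma xi (rcons p q') w'
  end.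

Definition exp_reward_at (Xtgt : set (n.-tuple R)) (sigma : strategy) (xi : adversary)
  (q : option K) (k : nat) : R :=
  \sum_(w : k.-tuple (option K)) reward Xtgt (last q w) * ext_prob sigma xi [:: q] w.

(* V_{sigma,xi,beta}(q) = E[ sum_k beta^k r(omega(k)) ]
                        = sum_k beta^k E[ r(omega(k)) ]   (Tonelli)       *)
Definition value (Xtgt : set (n.-tuple R)) (sigma : strategy) (xi : adversary)
  (beta : R) (q : option K) : \bar R :=
  (\sum_(0 <= k <oo) ((beta ^+ k) * exp_reward_at Xtgt sigma xi q k)%:E)%E.

End Abstraction.

(* Main.v *)
Require Import Defs.
From HB Require Import structures.
From mathcomp Require Import all_boot all_order all_algebra.
From mathcomp Require Import all_classical all_reals all_analysis.
Import Order.TTheory GRing.Theory Num.Theory.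
Import numFieldNormedType.Exports.
Local Open Scope classical_set_scope.
Local Open Scope ring_scope.

From mathcomp Require Import lra.
Section Comb.
Context {R : realType} {n : nat} {K : finType}.
Variables (X : set (n.-tuple R)) (cell : K -> set (n.-tuple R)) (m : nat)
  (lo hi : option K -> 'I_m -> option K -> R) (Xtgt : set (n.-tuple R)) (s eps : R).

Lemma dist_tilde q a g : Gamma_tilde X cell lo hi Xtgt s eps q a g -> is_dist g.
Proof.
rewrite /Gamma_tilde; case: ifP => _.
  move=> ->; split; first by move=> q'; rewrite /dirac_qu ler0n.
  rewrite (bigD1 None) //= big1 ?addr0 // => i /negbTE; rewrite /dirac_qu => ->.
  by [].
by case: q => [k [] |] //; case.
Qed.

Arguments dist_tilde {q a g}.
Variables (sigma : @strategy K m) (xi : @adversary R K m)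
  (hxi : admissible_adversary X cell lo hi Xtgt s eps xi).

Lemma ext_prob_ge0 w q0 p' : 0 <= ext_prob sigma xi (q0 :: p') w.
Proof.
elim: w p' => [|q' w IH] p' /=; first by [].
apply: mulr_ge0; last exact: (IH (rcons p' q')).
by case: (dist_tilde (hxi q0 p' (sigma (q0 :: p')))) => h _; apply: h.
Qed.

Lemma ext_prob_sum k q0 p' :
  \sum_(w : k.-tuple (option K)) ext_prob sigma xi (q0 :: p') w = 1.
Proof.
elim: k p' => [|k IH] p'.
  rewrite (eq_bigr (fun _ => 1)); last by move=> w _; rewrite tuple0.
  by rewrite sumr_const card_tuple expn0.
rewrite (reindex (fun pr : option K * k.-tuple (option K) => [tuple of pr.1 :: pr.2])) /=; last first.
  exists (fun w => (thead w, [tuple of behead w])).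
    by move=> [x t] _ /=; congr pair; apply: val_inj.
  by move=> w _; rewrite /= -tuple_eta.
rewrite -(pair_big xpredT xpredT (fun (x : option K) (t : k.-tuple (option K)) =>
   ext_prob sigma xi (q0 :: p') [tuple of x :: t])) /=.
rewrite (eq_bigr (fun x => xi (q0 :: p') (sigma (q0 :: p')) x)); last first.
  move=> x _; rewrite -mulr_sumr.
  by have := IH (rcons p' x); rewrite /= => ->; rewrite mulr1.
by case: (dist_tilde (hxi q0 p' (sigma (q0 :: p')))).
Qed.

Lemma exp_reward_bnd q k : 0 <= exp_reward_at cell Xtgt sigma xi q k <= 1.
Proof.
apply/andP; split.
  apply: sumr_ge0 => w _; apply: mulr_ge0; last exact: (ext_prob_ge0 w q [::]).
  by rewrite /reward ler0n.
rewrite -(ext_prob_sum k q [::]); apply: ler_sum => w _.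
apply: ler_piMl; first exact: (ext_prob_ge0 w q [::]).
by rewrite /reward; case: (is_tgt _ _ _).
Qed.
End Comb.
Section Ana.
Context {R : realType} (a : nat -> R) (ha : forall k, 0 <= a k <= 1).

Lemma geo (x : R) : 0 <= x < 1 ->
  (\sum_(0 <= k <oo) (x ^+ k)%:E = ((1 - x)^-1)%:E)%E.
Proof.
move=> /andP[x0 x1].
apply: cvg_lim => //.
apply: cvg_EFin; first by apply: nearW => N; rewrite sumEFin.
have := @cvg_geometric_series R 1 x; rewrite ger0_norm // mul1r => /(_ x1).
apply: cvg_trans; apply: near_eq_cvg; apply: nearW => N /=.
rewrite sumEFin /= /series /=; apply: eq_bigr => k _ /=; by rewrite mul1r.
Qed.

Let g (b : R) := (\sum_(0 <= k <oo) ((b ^+ k) * a k)%:E)%E.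

Lemma a0 k : 0 <= a k. Proof. by case/andP: (ha k). Qed.
Lemma a1 k : a k <= 1. Proof. by case/andP: (ha k). Qed.

Lemma g_ge0 b : 0 <= b -> (0 <= g b)%E.
Proof.
move=> b0; apply: nneseries_ge0 => k _ _; rewrite lee_fin mulr_ge0 ?exprn_ge0 ?a0 //.
Qed.

Lemma g_mono x y : 0 <= y -> y <= x -> (g y <= g x)%E.
Proof.
move=> y0 yx; apply: lee_nneseries => [k _ _|k _].
  by rewrite lee_fin mulr_ge0 ?exprn_ge0 ?a0.
by rewrite lee_fin ler_wpM2r ?a0 // lerXn2r // ?nnegrE // (le_trans y0).
Qed.

Lemma g_le x : 0 <= x < 1 -> (g x <= ((1 - x)^-1)%:E)%E.
Proof.
move=> hx; rewrite -geo //; case/andP: hx => x0 _.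
apply: lee_nneseries => [k _ _|k _].
  by rewrite lee_fin mulr_ge0 ?exprn_ge0 ?a0.
by rewrite lee_fin ler_piMr ?exprn_ge0 ?a1.
Qed.

Lemma g_key x y : 0 <= x -> x <= y -> y < 1 ->
  (g y + ((1 - x)^-1)%:E <= g x + ((1 - y)^-1)%:E)%E.
Proof.
move=> x0 xy y1.
have y0 : 0 <= y by apply: le_trans xy.
rewrite -geo ?x0 ?(le_lt_trans xy y1) // -geo ?y0 //.
rewrite /g -nneseriesD; first last.
- by move=> k _ _; rewrite lee_fin exprn_ge0.
- by move=> k _ _; rewrite lee_fin mulr_ge0 ?exprn_ge0 ?a0.
rewrite -nneseriesD; first last.
- by move=> k _ _; rewrite lee_fin exprn_ge0.
- by move=> k _ _; rewrite lee_fin mulr_ge0 ?exprn_ge0 ?a0.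
apply: lee_nneseries => [k _ _|k _].
  by rewrite adde_ge0 // lee_fin ?exprn_ge0 // mulr_ge0 ?exprn_ge0 ?a0.
rewrite -!EFinD lee_fin.
have h1 : x ^+ k <= y ^+ k by rewrite lerXn2r // nnegrE.
have h2 := a1 k; have h3 := a0 k.
nra.
Qed.

Lemma g_lsc x (z : R) : 0 <= x <= 1 -> (z%:E < g x)%E ->
  \forall y \near x, 0 <= y -> (z%:E < g y)%E.
Proof.
move=> /andP[x0 x1].
have u0 : forall b, 0 <= b -> forall k, (0 <= ((b ^+ k) * a k)%:E)%E.
  by move=> b b0 k; rewrite lee_fin mulr_ge0 ?exprn_ge0 ?a0.
rewrite /g; have := @ereal_nondecreasing_series R (fun k => ((x ^+ k) * a k)%:E) xpredT 0 (fun k _ _ => u0 x x0 k).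
move/ereal_nondecreasing_cvgn/cvg_lim => -> //.
move=> /ereal_sup_gt [_ [N _ <-]] /=.
rewrite sumEFin lte_fin => zN.
have cP : (fun y : R => \sum_(0 <= k < N) y ^+ k * a k) @ x --> \sum_(0 <= k < N) x ^+ k * a k.
  have E : forall y : R, \sum_(0 <= k < N) y ^+ k * a k = (\poly_(k < N) a k).[y].
    by move=> y; rewrite horner_poly big_mkord; apply: eq_bigr => k _; rewrite mulrC.
  rewrite (funext E) E; exact: continuous_horner.
near=> y => y0.
apply: (@lt_le_trans _ _ (\sum_(0 <= k < N) ((y ^+ k) * a k)%:E)%E).
  rewrite sumEFin lte_fin; near: y; exact: cvgr_gt cP _ zN.
by apply: nneseries_lim_ge => k _ _; apply: u0.
Unshelve. all: by end_near.
Qed.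

Lemma sandwich {T} (F : set_system T) {FF : Filter F} (h : T -> \bar R) (l : R) :
 (forall z : R, z < l -> \forall y \near F, (z%:E < h y)%E) ->
 (forall z : R, l < z -> \forall y \near F, (h y < z%:E)%E) -> h @ F --> l%:E.
Proof.
move=> Hl Hu; apply/fine_cvgP; split.
  have := Hl (l - 1) ltac:(lra); have := Hu (l + 1) ltac:(lra).
  apply: filterS2 => y h1 h2; rewrite fin_numE; apply/andP; split.
    by apply/negP => /eqP e; rewrite e in h2.
  by apply/negP => /eqP e; rewrite e in h1.
apply/cvgrPdist_lt => e e0.
have := Hl (l - e) ltac:(lra); have := Hu (l + e) ltac:(lra).
apply: filterS2 => y h1 h2.
have fy : h y \is a fin_num.
  rewrite fin_numE; apply/andP; split.
    by apply/negP => /eqP e'; rewrite e' in h2.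
  by apply/negP => /eqP e'; rewrite e' in h1.
move: h1 h2; rewrite -(fineK fy) !lte_fin /= => h1 h2.
rewrite ltr_distlC; apply/andP; split => //.
Qed.

Lemma g_cont : {within `]0, 1], continuous g}.
Proof.
apply/subspace_continuousP => x /=; rewrite in_itv /= => /andP[x0 x1].
rewrite /from_subspace.
have lsc : forall z : R, (z%:E < g x)%E ->
    \forall y \near within `]0, 1] (nbhs x), (z%:E < g y)%E.
  move=> z zx; have := g_lsc x z ltac:(apply/andP; split; lra) zx.
  move=> H; apply: filterS H => y Hy; rewrite /= in_itv /= => /andP[y0 _].
  by apply: Hy; apply: ltW.
have [xlt1|xge1] := ltP x 1.
  have gfin : g x \is a fin_num.
    rewrite ge0_fin_numE ?g_ge0 ?ltW //.
    by apply: (le_lt_trans (g_le x ltac:(apply/andP; split; lra))); apply: ltry.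
  rewrite -(fineK gfin); apply: sandwich => z zl.
    by apply: lsc; rewrite -(fineK gfin) lte_fin.
  have ylt1 : \forall y \near x, y < 1 :> R by exact: lt_nbhsl.
  have cV : (fun y : R => (1 - y)^-1) @ x --> (1 - x)^-1.
    apply: cvgV; first by rewrite subr_eq0; apply/eqP; lra.
    by apply: cvgB; [exact: cvg_cst | exact: cvg_id].
  have hV : \forall y \near x, (1 - y)^-1 < (1 - x)^-1 + (z - fine (g x)).
    by move: cV => /cvgr_lt; apply; lra.
  rewrite /within; apply: filterS2 ylt1 hV => y y1 yV; rewrite /= in_itv /= => /andP[y0 _].
  have [yx|xy] := leP y x.
    by apply: (le_lt_trans (g_mono x y (ltW y0) yx)); rewrite -(fineK gfin) lte_fin.
  have gyfin : g y \is a fin_num.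
    rewrite ge0_fin_numE ?g_ge0 ?ltW //.
    by apply: (le_lt_trans (g_le y ltac:(apply/andP; split; lra))); apply: ltry.
  have := g_key x y (ltW x0) (ltW xy) y1.
  rewrite -(fineK gfin) -(fineK gyfin) -!EFinD lee_fin -(fineK gyfin) lte_fin.
  lra.
have x_1 : x = 1 by apply/eqP; rewrite eq_le x1 xge1.
subst x.
case E: (g 1) => [l| |].
- apply: sandwich => z zl.
    by apply: lsc; rewrite E lte_fin.
  have H : \forall y \near (1:R), `]0, 1]%classic y -> (g y < z%:E)%E; last exact: H.
  apply: filterE => y; rewrite /= in_itv /= => /andP[y0 y1].
  by apply: (le_lt_trans (g_mono 1 y (ltW y0) y1)); rewrite E lte_fin.
- apply/cvgeyPge => A; have := lsc A; rewrite E => /(_ (ltry _)).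
  by apply: filterS => y /ltW.
- by have := g_ge0 1 ler01; rewrite E.
Qed.
End Ana.
Theorem lemma3
  (R : realType) (n : nat) (s eps : R) (m : nat)
  (f : 'I_m -> n.-tuple R -> n.-tuple R)
  (p : probability (n.-tuple R) R)
  (X Xtgt : set (n.-tuple R)) (K : finType) (cell : K -> set (n.-tuple R))
  (lo hi : option K -> 'I_m -> option K -> R)
  (* standing assumptions on the dynamics and the noise *)
  (hs : 1 <= s) (heps : 0 <= eps)
  (hf : forall u, continuous_Rn (f u))
  (hmoment : (\int[p]_v ((enorm v) `^ s)%:E < +oo)%E)
  (* the partition *)
  (hXmeas : measurable X) (hXbd : bounded_Rn X) (hXtgt : Xtgt `<=` X)
  (hcellmeas : forall k, measurable (cell k))
  (hdisj : forall k k', k != k' -> cell k `&` cell k' = set0)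
  (hcover : \bigcup_k cell k = X)
  (htgtcell : forall k, cell k `<=` Xtgt \/ cell k `&` Xtgt = set0)
  (* the transition bounds *)
  (hlohi : forall q a q', 0 <= lo q a q' /\ lo q a q' <= hi q a q' /\ hi q a q' <= 1)
  (hsum : forall q a, \sum_(q' : option K) lo q a q' <= 1
                      /\ 1 <= \sum_(q' : option K) hi q a q')
  (hlo : forall k a q' x, cell k x ->
           ((lo (Some k) a q')%:E <= Tker p (f a) (cellQ X cell q') x)%E)
  (hhi : forall k a q' x, cell k x ->
           (Tker p (f a) (cellQ X cell q') x <= (hi (Some k) a q')%:E)%E)
  (hqu : forall a, lo None a None = 1 /\ hi None a None = 1)
  (* strategy and adversary of the discounted robust MDP *)
  (sigma : @strategy K m) (xi : @adversary R K m)
  (hxi : admissible_adversary X cell lo hi Xtgt s eps xi)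
  (q : option K) :
  {within `]0, 1], continuous (fun beta : R => value cell Xtgt sigma xi beta q)}.
Proof.
apply: (@g_cont R (fun k => exp_reward_at cell Xtgt sigma xi q k)) => k.
exact: (exp_reward_bnd _ _ _ _ _ _ _ _ _ _ hxi q k).
Qed.
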